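(* Let $C\subseteq\{0,1\}^n$ with $|C|\leq 2^{\frac{1}{64}n}$, let $\epsilon<1/8$, and let $J\subseteq[n]$ with $|J|\leq n/2$. Then a random $X\sim U_J(C)$ is $\epsilon$-far from $C$ with probability $1-o(1)$ (as $n\to\infty$). Furthermore, this remains true when conditioned on any value of $X[J]$.
   Context: $[n]=\{1,\dots,n\}$. For $x\in\{0,1\}^n$ and $J\subseteq[n]$, $x[J]=(x_j)_{j\in J}$. $U(C)$ denotes the uniform distribution on $C$, and $U_J(C)$ denotes the distribution obtained by drawing $x\sim U(C)$ and then replacing $x[[n]\setminus J]$ by a uniformly random vector in $\{0,1\}^{n-|J|}$, independent of everything else. Distance is normalized Hamming distance $d(x,y)=|\{i:x_i\neq y_i\}|/n$, $d(x,C)=\min_{c\in C}d(x,c)$, and $x$ is $\epsilon$-far from $C$ if $d(x,C)>\epsilon$. *)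

(* Defs.v *)
From mathcomp Require Import all_boot all_order all_algebra.
From mathcomp Require Import all_classical all_reals.
From mathcomp Require Import topology normedtype sequences exp.
Set Implicit Arguments. Unset Strict Implicit. Unset Printing Implicit Defensive.
Import Order.TTheory GRing.Theory Num.Theory.
Local Open Scope ring_scope.

Definition word (n : nat) := {ffun 'I_n -> bool}.

Definition ham (n : nat) (x y : word n) : nat := #|[set i | x i != y i]|.

Definition dist (R : realType) (n : nat) (x y : word n) : R :=
  (ham x y)%:R / n%:R.

(* d(x,C) = min_{c in C} d(x,c)  (for nonempty C; default n is never smaller
   than any ham value, so it does not affect the minimum) *)
Definition distC (R : realType) (n : nat) (x : word n) (C : {set word n}) : R :=
  (\big[minn/n]_(c in C) ham x c)%N%:R / n%:R.

Definition far (R : realType) (n : nat) (eps : R) (x : word n) (C : {set word n}) : bool :=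
  (eps < distC R x C)%R.

Definition agree_on (n : nat) (J : {set 'I_n}) (x y : word n) : bool :=
  [forall j in J, x j == y j].

(* Sample space of U_J(C): a uniformly random pair (c, X) with c in C and
   X a vector with X[J] = c[J] (the coordinates outside J of X being uniform,
   independent of c).  The map (c, r) |-> (c, X) with X[J] = c[J],
   X[[n]\J] = r is a bijection C x {0,1}^{n-|J|} -> UJ_space C J, so the
   second component of a uniform element of UJ_space C J is distributed
   exactly as U_J(C). *)
Definition UJ_space (n : nat) (C : {set word n}) (J : {set 'I_n})
  : {set word n * word n} :=
  [set p | (p.1 \in C) && agree_on J p.1 p.2].

Definition UJ_prob (R : realType) (n : nat) (C : {set word n}) (J : {set 'I_n})
  (E : word n -> bool) : R :=
  #|[set p in UJ_space C J | E p.2]|%:R / #|UJ_space C J|%:R.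

Definition UJ_cprob (R : realType) (n : nat) (C : {set word n}) (J : {set 'I_n})
  (v : word n) (E : word n -> bool) : R :=
  #|[set p in UJ_space C J | E p.2 && agree_on J p.2 v]|%:R /
  #|[set p in UJ_space C J | agree_on J p.2 v]|%:R.

(* Main.v *)
Require Import Defs.
From mathcomp Require Import all_boot all_order all_algebra.
From mathcomp Require Import all_classical all_reals.
From mathcomp Require Import topology normedtype sequences exp.
From mathcomp Require Import ring lra zify.
Import Order.TTheory GRing.Theory Num.Theory.

Module Helpers.
Set Implicit Arguments. Unset Strict Implicit. Unset Printing Implicit Defensive.

Section Comb.
Variables (n : nat) (J : {set 'I_n}).
Local Notation m := #|~: J|.

Definition Fib (c0 : word n) : {set word n} := [set X : word n | agree_on J c0 X].
Definition agO (X c : word n) : nat := #|~: J :&: [set i | X i == c i]|.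

Lemma fib_sum (c0 : word n) (g : 'I_n -> bool -> nat) :
  (\sum_(X in Fib c0) \prod_(i in ~: J) g i (X i) =
   \prod_(i in ~: J) (g i true + g i false))%N.
Proof.
pose w i b := if i \in J then nat_of_bool (c0 i == b) else g i b.
have -> : (\prod_(i in ~: J) (g i true + g i false) =
           \prod_i \sum_(b : bool) w i b)%N.
  rewrite [RHS](bigID (fun i => i \in J)) /=.
  rewrite [X in (_ = X * _)%N]big1 ?mul1n.
    apply: eq_big => [i|i]; rewrite ?inE // => /negbTE iJ; rewrite big_bool /w iJ //.
  by move=> i iJ; rewrite big_bool /w iJ; case: (c0 i).
rewrite bigA_distr_bigA /= [LHS]big_mkcond /=.
apply: eq_bigr => X _.
rewrite [RHS](bigID (fun i => i \in J)) /=.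
rewrite [Y in (_ = _ * Y)%N](eq_big (fun i => i \in ~: J) (fun i => g i (X i))); last first.
  by move=> i /negbTE iJ; rewrite /w iJ.
  by move=> i; rewrite inE.
rewrite inE; case: (boolP (agree_on J c0 X)) => [/forallP H | /forallPn [j]].
  rewrite [Y in (_ = Y * _)%N]big1 ?mul1n // => i iJ; rewrite /w iJ.
  by have := H i; rewrite iJ /= => ->.
rewrite negb_imply => /andP [jJ /negbTE hj].
by rewrite (bigD1 j) //= {1}/w jJ hj.
Qed.

Lemma card_Fib c0 : #|Fib c0| = (2 ^ m)%N.
Proof.
have := fib_sum c0 (fun _ _ => 1%N).
rewrite (eq_bigr (fun _ => 1%N)) ?sum1_card; last by move=> X _; rewrite big1.
move=> ->; by rewrite prod_nat_const.
Qed.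

Lemma agO_sum c0 c : (\sum_(X in Fib c0) 2 ^ agO X c = 3 ^ m)%N.
Proof.
have := fib_sum c0 (fun i b => 2 ^ (b == c i))%N.
have -> : (\prod_(i in ~: J) (2 ^ (true == c i) + 2 ^ (false == c i)) = 3 ^ m)%N.
  rewrite -prod_nat_const; apply: eq_bigr => i _; by case: (c i).
move=> <-; apply: eq_bigr => X _.
rewrite -expn_sum; congr (2 ^ _)%N.
rewrite /agO -sum1_card big_mkcond /= [RHS]big_mkcond /=.
apply: eq_bigr => i _; rewrite !inE eq_sym.
by case: (i \in J); case: (c i == X i).
Qed.

Lemma agO_ham X c : (m <= agO X c + ham X c)%N.
Proof.
rewrite -(cardsID [set i | X i == c i] (~: J)) leq_add2l /agO /ham.
apply: (@subset_leq_card _ _ _); apply/fintype.subsetP => i; rewrite !inE.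
by case/andP.
Qed.

Lemma bad_bound (C : {set word n}) (K : nat) c0 :
  (#|[set X in Fib c0 | [exists c in C, ham X c <= K]]| * 2 ^ m
    <= 2 ^ K * (#|C| * 3 ^ m))%N.
Proof.
rewrite -sum_nat_cond_const.
apply: (@leq_trans (2 ^ K * \sum_(X in Fib c0 | [exists c in C, ham X c <= K]) \sum_(c in C) 2 ^ agO X c)%N).
  rewrite big_distrr /=.
  apply: leq_sum => X /andP [_ /existsP [c /andP [cC hc]]].
  rewrite (bigD1 c) //= mulnDr.
  apply: leq_trans (leq_addr _ _).
  rewrite -expnD addnC.
  apply: leq_pexp2l => //.
  apply: leq_trans (agO_ham X c) _.
  by rewrite leq_add2l.
rewrite leq_mul2l; apply/orP; right.
apply: (@leq_trans (\sum_(X in Fib c0) \sum_(c in C) 2 ^ agO X c)%N).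
  rewrite [X in (_ <= X)%N](bigID (fun X => [exists c in C, ham X c <= K])) /=.
  exact: leq_addr.
rewrite exchange_big /=.
rewrite (eq_bigr (fun _ => 3 ^ m)%N); last by move=> c _; rewrite agO_sum.
by rewrite sum_nat_const.
Qed.

End Comb.

End Helpers.
Import Helpers.

Module Helpers2.
Set Implicit Arguments. Unset Strict Implicit. Unset Printing Implicit Defensive.
Local Open Scope ring_scope.

Lemma q_props (R : realType) :
  0 <= Num.sqrt (15/16 : R) /\ Num.sqrt (15/16 : R) ^+ 2 = 15/16.
Proof. split; [exact: sqrtr_ge0 | rewrite sqr_sqrtr //; lra]. Qed.

Lemma q_lt1 (R : realType) : Num.sqrt (15/16 : R) < 1.
Proof. have [h1 h2] := q_props R. rewrite expr2 in h2. nra. Qed.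

Lemma rho_bound (R : realType) (n m K c : nat) :
  (c%:R : R) <= 2 `^ (n%:R / 64) -> (K * 8 <= n)%N -> (n <= 2 * m)%N ->
  ((2 ^ K * (c * 3 ^ m))%N%:R / ((2 ^ m * 2 ^ m)%N%:R) : R)
   <= Num.sqrt (15/16) ^+ n.
Proof.
move=> hc hK hm.
have [q0 q2] := q_props R.
set q := Num.sqrt _ in q0 q2 *.
have -> : ((2 ^ K * (c * 3 ^ m))%N%:R / ((2 ^ m * 2 ^ m)%N%:R) : R)
    = 2 ^+ K * c%:R * (3/4) ^+ m.
  rewrite !natrM !natrX expr_div_n (_ : (4:R) = 2 * 2); last lra.
  rewrite exprMn; field; by rewrite expf_neq0 //; lra.
have c0 : (0 : R) <= c%:R by [].
have hc64 : (c%:R : R) ^+ 64 <= 2 ^+ n.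
  apply: le_trans (lerXn2r 64 _ _ hc) _; rewrite ?nnegrE ?powR_ge0 //.
  rewrite -powR_mulrn ?powR_ge0 // -powRrM.
  have -> : (n%:R / 64 * 64%:R : R) = n%:R by field.
  by rewrite powR_mulrn.
rewrite -(ler_pXn2r (n := 64)) // ?nnegrE; last first.
  by apply: exprn_ge0.
  by apply: mulr_ge0; [apply: mulr_ge0 => //; apply: exprn_ge0 | apply: exprn_ge0; lra].
have e1 : ((2 : R) ^+ K) ^+ 64 <= 2 ^+ (8 * n).
  rewrite -exprM (ler_eXn2l (_ : 1 < (2:R))); [lia|lra].
have e2 : ((3/4 : R) ^+ m) ^+ 64 <= (3/4) ^+ (32 * n).
  by rewrite -exprM; apply: ler_wiXn2l; [lra | lra | lia].
rewrite exprMn [X in X * _ <= _]exprMn.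
apply: (@le_trans _ _ (2 ^+ (8 * n) * 2 ^+ n * (3/4) ^+ (32 * n))).
  apply: ler_pM; [ | | apply: ler_pM | ] => //; rewrite ?exprn_ge0 //; try lra.
  by apply: mulr_ge0; apply: exprn_ge0 => //; apply: exprn_ge0; lra.
have -> : 2 ^+ (8 * n) * 2 ^+ n * (3/4:R) ^+ (32 * n) = (2 ^+ 9 * (3/4) ^+ 32) ^+ n.
  rewrite [RHS]exprMn -!exprM -exprD.
  by have -> : (8 * n + n = 9 * n)%N by lia.
have -> : (q ^+ n) ^+ 64 = ((15/16) ^+ 32) ^+ n.
  by rewrite -q2 -!exprM; congr (_ ^+ _); lia.
apply: lerXn2r; rewrite ?nnegrE; try lra.
Qed.

End Helpers2.
Import Helpers2.

Module Helpers3.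
Local Open Scope ring_scope.

Lemma card_pairs n (P : word n -> word n -> bool) :
  #|[set p : word n * word n | P p.1 p.2]| = (\sum_a #|[set b | P a b]|)%N.
Proof.
rewrite [RHS](eq_bigr (fun a => \sum_b (if P a b then 1 else 0))%N); last first.
  by move=> a _; rewrite -sum1_card big_mkcond /=; apply: eq_bigr => b _; rewrite inE.
rewrite pair_bigA -sum1_card big_mkcond /=; apply: eq_bigr => p _; by rewrite inE.
Qed.

Lemma card_split (T : finType) (A : {set T}) (P : pred T) :
  (#|[set x in A | P x]| + #|[set x in A | ~~ P x]|)%N = #|A|.
Proof.
rewrite -(cardsID [set x | P x] A); congr (_ + _)%N; apply: eq_card => x.
  by rewrite !inE.
by rewrite !inE // andbC.
Qed.

Lemma agree_trans n (J : {set 'I_n}) x y z :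
  agree_on J x y -> agree_on J y z -> agree_on J x z.
Proof.
move=> /forallP h1 /forallP h2; apply/forallP => j; apply/implyP => jJ.
have := h1 j; have := h2 j; rewrite jJ /= => /eqP <- /eqP ->; done.
Qed.

Lemma agree_sym n (J : {set 'I_n}) x y :
  agree_on J x y -> agree_on J y x.
Proof.
move=> /forallP h1; apply/forallP => j; apply/implyP => jJ.
by have := h1 j; rewrite jJ /= eq_sym.
Qed.

Lemma agree_refl n (J : {set 'I_n}) x : agree_on J x x.
Proof. by apply/forallP => j; apply/implyP. Qed.

Lemma andb_perm3 a b c : a && (b && c) = (a && c) && b.
Proof. by case: a; case: b; case: c. Qed.

Lemma close_of_notfar (R : realType) n (eps : R) (C : {set word n}) X :
  eps < 1/8 -> (0 < #|C|)%N -> ~~ far eps X C ->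
  [exists c in C, ham X c <= n %/ 8]%N.
Proof.
move=> he hC hnf.
case: (posnP n) => [n0 | npos].
  have /card_gt0P [c cC] := hC.
  apply/existsP; exists c; rewrite cC /=.
  have := max_card [set i | X i != c i]; rewrite card_ord => h.
  by apply: leq_trans h _; rewrite n0.
apply: contraNT hnf => /existsPn hno.
rewrite /far /distC ltr_pdivlMr ?ltr0n //.
have hn : (0 < n%:R :> R) by rewrite ltr0n.
apply: (big_ind (fun k : nat => eps * n%:R < k%:R)).
- nra.
- move=> a b ha hb; rewrite /minn; by case: ifP.
- move=> c cC; have := hno c; rewrite cC /= -ltnNge => h.
  have h8 : (n < 8 * ham X c)%N by lia.
  move: h8; rewrite -(ltr_nat R) natrM => h8.
  nra.
Qed.

Lemma main_bound (R : realType) (eps : R) n (C : {set word n}) (J : {set 'I_n}) :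
  eps < 1 / 8 ->
      (0 < #|C|)%N ->
      (#|C|%:R : R) <= 2 `^ (n%:R / 64) ->
      (#|J|%:R : R) <= n%:R / 2 ->
      1 - Num.sqrt (15/16 : R) ^+ n <= UJ_prob R C J (fun x => far eps x C) /\
      forall v : word n,
        (0 < #|[set p in UJ_space C J | agree_on J p.2 v]|)%N ->
        1 - Num.sqrt (15/16 : R) ^+ n <= UJ_cprob R C J v (fun x => far eps x C).
Proof.
move=> heps C0 HC HJ.
set q := Num.sqrt (15/16 : R).
set m := #|~: J|.
set K := (n %/ 8)%N.
set N := (2 ^ K * (#|C| * 3 ^ m))%N.
have hJm : (n <= 2 * m)%N.
  have h1 := cardsC J; rewrite card_ord in h1.
  have h2 : (2 * #|J| <= n)%N.
    rewrite -(ler_nat R) natrM; lra.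
  rewrite /m; lia.
have hK : (K * 8 <= n)%N by rewrite /K; lia.
have rho := rho_bound HC hK hJm.
have key : forall c0, (#|[set X in Fib J c0 | ~~ far eps X C]| * 2 ^ m <= N)%N.
  move=> c0; apply: leq_trans _ (bad_bound J C K c0).
  rewrite leq_mul2r; apply/orP; right.
  apply/subset_leq_card/fintype.subsetP => X; rewrite !inE => /andP [-> nf] /=.
  exact: (@close_of_notfar R n eps C X heps C0 nf).
have per_a : forall (Bs Fs : {set word n}) a,
    Bs \subset [set X in Fib J a | ~~ far eps X C] ->
    (Bs != finset.set0 -> Fs = Fib J a) ->
    (#|Bs| * (2 ^ m * 2 ^ m) <= N * #|Fs|)%N.
  move=> Bs Fs a hsub hF.
  case: (eqVneq Bs finset.set0) => [->|hne]; first by rewrite cards0.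
  rewrite (hF hne) card_Fib mulnA leq_mul2r; apply/orP; right.
  apply: leq_trans (key a); rewrite leq_mul2r; apply/orP; right.
  exact: subset_leq_card.
have final : forall G B T : nat, (G + B = T)%N -> (0 < T)%N ->
    (B * (2 ^ m * 2 ^ m) <= N * T)%N -> 1 - q ^+ n <= G%:R / T%:R.
  move=> G B T hGBT hT hB.
  have hT' : (0 < T%:R :> R) by rewrite ltr0n.
  have hBT : B%:R / T%:R <= N%:R / (2 ^ m * 2 ^ m)%N%:R :> R.
    rewrite ler_pdivrMr // mulrAC ler_pdivlMr ?ltr0n ?muln_gt0 ?expn_gt0 //.
    by rewrite -!natrM ler_nat.
  have eG : G%:R / T%:R = 1 - B%:R / T%:R :> R.
    rewrite -hGBT natrD; field.
    by move: hT'; rewrite -hGBT natrD => h; rewrite lt0r_neq0.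
  have rho' : N%:R / (2 ^ m * 2 ^ m)%N%:R <= q ^+ n :> R by exact: rho.
  rewrite eG; lra.
split.
  rewrite /UJ_prob.
  apply: (final _ #|[set p in UJ_space C J | ~~ far eps p.2 C]|).
  - exact: (card_split _ (UJ_space C J) (fun p => far eps p.2 C)).
  - have /card_gt0P [c0 c0C] := C0.
    apply/card_gt0P; exists (c0, c0); rewrite /UJ_space inE /= c0C.
    exact: agree_refl.
  - have eB : #|[set p in UJ_space C J | ~~ far eps p.2 C]| =
      (\sum_a #|[set b | (a \in C) && agree_on J a b && ~~ far eps b C]|)%N.
      transitivity #|[set p : word n * word n |
          (p.1 \in C) && agree_on J p.1 p.2 && ~~ far eps p.2 C]|.
        by apply: eq_card => p; rewrite /UJ_space !inE.
      exact: (card_pairs _ (fun a b => (a \in C) && agree_on J a b && ~~ far eps b C)).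
    have eT : #|UJ_space C J| =
      (\sum_a #|[set b | (a \in C) && agree_on J a b]|)%N.
      exact: (card_pairs _ (fun a b => (a \in C) && agree_on J a b)).
    rewrite eB eT big_distrl big_distrr /=; apply: leq_sum => a _.
    apply: (per_a _ _ a).
      by apply/fintype.subsetP => X; rewrite /Fib !inE => /andP [/andP [_ ->] ->].
    move=> /set0Pn [b]; rewrite inE => /andP [/andP [aC _] _].
    by apply/setP => X; rewrite /Fib !inE aC.
move=> v hT.
rewrite /UJ_cprob.
apply: (final _ #|[set p in UJ_space C J | ~~ far eps p.2 C && agree_on J p.2 v]|).
- rewrite -(card_split _ [set p in UJ_space C J | agree_on J p.2 v] (fun p => far eps p.2 C)).
  by congr (_ + _)%N; apply: eq_card => p; rewrite !inE andb_perm3.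
- exact: hT.
- have eB : #|[set p in UJ_space C J | ~~ far eps p.2 C && agree_on J p.2 v]| =
    (\sum_a #|[set b | (a \in C) && agree_on J a b && (~~ far eps b C && agree_on J b v)]|)%N.
    transitivity #|[set p : word n * word n |
        (p.1 \in C) && agree_on J p.1 p.2 && (~~ far eps p.2 C && agree_on J p.2 v)]|.
      by apply: eq_card => p; rewrite /UJ_space !inE.
    exact: (card_pairs _ (fun a b => (a \in C) && agree_on J a b && (~~ far eps b C && agree_on J b v))).
  have eT : #|[set p in UJ_space C J | agree_on J p.2 v]| =
    (\sum_a #|[set b | (a \in C) && agree_on J a b && agree_on J b v]|)%N.
    transitivity #|[set p : word n * word n |
        (p.1 \in C) && agree_on J p.1 p.2 && agree_on J p.2 v]|.
      by apply: eq_card => p; rewrite /UJ_space !inE.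
    exact: (card_pairs _ (fun a b => (a \in C) && agree_on J a b && agree_on J b v)).
  rewrite eB eT big_distrl big_distrr /=; apply: leq_sum => a _.
  apply: (per_a _ _ a).
    by apply/fintype.subsetP => X; rewrite /Fib !inE => /andP [/andP [_ ->] /andP [-> _]].
  move=> /set0Pn [b]; rewrite inE => /andP [/andP [aC hab] /andP [_ hbv]].
  have hav := agree_trans _ _ _ _ _ hab hbv.
  apply/setP => X; rewrite /Fib !inE aC /=.
  case hX: (agree_on J a X) => //=.
  exact: (agree_trans _ _ _ _ _ (agree_sym _ _ _ _ hX) hav).
Qed.

End Helpers3.
Import Helpers3.

Local Open Scope ring_scope.
Import numFieldNormedType.Exports.
Local Open Scope classical_set_scope.

Theorem lemma6 (R : realType) (eps : R) :
  eps < 1 / 8 ->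
  exists delta : nat -> R,
    (delta : R^nat) @ \oo --> 0 /\
    forall (n : nat) (C : {set word n}) (J : {set 'I_n}),
      (0 < #|C|)%N ->
      (#|C|%:R : R) <= 2 `^ (n%:R / 64) ->
      (#|J|%:R : R) <= n%:R / 2 ->
      1 - delta n <= UJ_prob R C J (fun x => far eps x C) /\
      forall v : word n,
        (0 < #|[set p in UJ_space C J | agree_on J p.2 v]|)%N ->
        1 - delta n <= UJ_cprob R C J v (fun x => far eps x C).
Proof.
move=> heps.
exists (fun n => Num.sqrt (15/16 : R) ^+ n); split.
  apply: cvg_expr; rewrite ger0_norm ?sqrtr_ge0 //; exact: q_lt1.
move=> n C J C0 HC HJ.
exact: main_bound.
Qed.
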